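(* There exist a closed flat surface $N$ and a configuration of two disjoint embedded open metric disks of the same diameter $h$ in $N$, with centers at distance $d$, realizing the supremum of $h\sqrt{4h^2+d^2}/\mathsf{vol}(N)$ over all closed flat surfaces and all such configurations of two disjoint disks of equal diameter.
   Context: A closed flat surface is a flat torus or flat Klein bottle; $\mathsf{vol}$ is area; $d$ is the distance between the centers of the two disks in the flat metric. *)

(* Defs.v *)
From Stdlib Require Import Reals ZArith.
Open Scope R_scope.

Definition point := (R * R)%type.

Definition eucl (p q : point) : R :=
  sqrt ((fst p - fst q) ^ 2 + (snd p - snd q) ^ 2).

(* A closed flat surface, up to isometry:
   - a flat torus R^2 / (Z u + Z v), u v linearly independent;
   - a flat Klein bottle R^2 / G, G generated by the glide reflection
     (x,y) |-> (x + a, -y) and the translation (x,y) |-> (x, y + b), a,b > 0. *)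
Inductive flat_surface :=
  | FlatTorus (u v : point)
  | FlatKlein (a b : R).

Definition valid_surface (N : flat_surface) : Prop :=
  match N with
  | FlatTorus u v => fst u * snd v - snd u * fst v <> 0
  | FlatKlein a b => 0 < a /\ 0 < b
  end.

(* The deck group, indexed by (m, n) in Z^2 (every element is of this form). *)
Definition act (N : flat_surface) (m n : Z) (p : point) : point :=
  match N with
  | FlatTorus u v =>
      (fst p + IZR m * fst u + IZR n * fst v,
       snd p + IZR m * snd u + IZR n * snd v)
  | FlatKlein a b =>
      (fst p + IZR m * a,
       (if Z.even m then snd p else - snd p) + IZR n * b)
  end.

Definition area (N : flat_surface) : R :=
  match N with
  | FlatTorus u v => Rabs (fst u * snd v - snd u * fst v)
  | FlatKlein a b => a * b
  end.

Definition flat_dist (N : flat_surface) (p q : point) (d : R) : Prop :=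
  (forall m n, d <= eucl p (act N m n q)) /\
  (forall d', (forall m n, d' <= eucl p (act N m n q)) -> d' <= d).

(* The open metric disk of radius r in N centered at the projection of p,
   as an invariant subset of R^2 (preimage under the covering map):
   points x whose class is at flat distance < r from the class of p. *)
Definition flat_disk (N : flat_surface) (p : point) (r : R) (x : point) : Prop :=
  exists m n, eucl (act N m n x) p < r.

(* The disk is embedded: the covering map restricted to the Euclidean
   disk B(p, r) is injective. *)
Definition embedded_disk (N : flat_surface) (p : point) (r : R) : Prop :=
  forall x y, eucl x p < r -> eucl y p < r ->
    (exists m n, y = act N m n x) -> x = y.

Definition disjoint_disks (N : flat_surface) (p q : point) (r : R) : Prop :=
  forall x, ~ (flat_disk N p r x /\ flat_disk N q r x).

Definition admissible (N : flat_surface) (p q : point) (h d : R) : Prop :=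
  valid_surface N /\ 0 < h /\
  embedded_disk N p (h / 2) /\ embedded_disk N q (h / 2) /\
  disjoint_disks N p q (h / 2) /\ flat_dist N p q d.

Definition objective (N : flat_surface) (h d : R) : R :=
  h * sqrt (4 * h ^ 2 + d ^ 2) / area N.

(* Main.v *)
Require Import Defs.
From Stdlib Require Import Reals ZArith Lra Lia Psatz List.
Open Scope R_scope.

Definition d2 (z w : point) : R := (fst z - fst w)^2 + (snd z - snd w)^2.
Definition mid (z w : point) : point := ((fst z + fst w)/2, (snd z + snd w)/2).

Lemma eucl_d2 z w : eucl z w = sqrt (d2 z w).
Proof. reflexivity. Qed.

Lemma d2_nonneg z w : 0 <= d2 z w.
Proof. unfold d2. apply Rplus_le_le_0_compat; apply pow2_ge_0. Qed.

Lemma eucl_sym z w : eucl z w = eucl w z.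
Proof. unfold eucl. f_equal. ring. Qed.

Lemma eucl_lt_d2 z w r : 0 < r -> eucl z w < r -> d2 z w < r^2.
Proof.
  intros Hr H. rewrite eucl_d2 in H.
  assert (H0 := d2_nonneg z w).
  rewrite <- (sqrt_sqrt (d2 z w)) by lra.
  assert (0 <= sqrt (d2 z w)) by apply sqrt_pos. nra.
Qed.

Lemma d2_lt_eucl z w r : 0 < r -> d2 z w < r^2 -> eucl z w < r.
Proof.
  intros Hr H. rewrite eucl_d2.
  rewrite <- (sqrt_pow2 r) by lra. apply sqrt_lt_1_alt. split; [apply d2_nonneg| lra].
Qed.

Lemma le_eucl_d2 z w r : 0 <= r -> r <= eucl z w -> r^2 <= d2 z w.
Proof.
  intros Hr H. rewrite eucl_d2 in H.
  assert (H0 := d2_nonneg z w).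
  rewrite <- (sqrt_sqrt (d2 z w)) by lra. nra.
Qed.

Lemma d2_le_eucl z w r : 0 <= r -> r^2 <= d2 z w -> r <= eucl z w.
Proof.
  intros Hr H. rewrite eucl_d2.
  rewrite <- (sqrt_pow2 r) by lra. apply sqrt_le_1_alt. lra.
Qed.

Lemma act00 N z : act N 0 0 z = z.
Proof. destruct N, z; simpl; f_equal; ring. Qed.

Lemma act_inv N m n : exists m' n', forall z,
  act N m' n' (act N m n z) = z /\ act N m n (act N m' n' z) = z.
Proof.
  destruct N as [u v | a b].
  - exists (-m)%Z, (-n)%Z. intros [x y]. simpl. rewrite !opp_IZR.
    split; f_equal; ring.
  - exists (-m)%Z, (if Z.even m then (-n)%Z else n).
    intros [x y]. simpl. rewrite Z.even_opp.
    destruct (Z.even m); simpl; rewrite ?opp_IZR; split; f_equal; ring.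
Qed.

Lemma act_d2 N m n z w : d2 (act N m n z) (act N m n w) = d2 z w.
Proof.
  destruct N, z, w; unfold d2; simpl; try ring.
  destruct (Z.even m); ring.
Qed.

Lemma act_eucl N m n z w : eucl (act N m n z) (act N m n w) = eucl z w.
Proof. rewrite !eucl_d2, act_d2. reflexivity. Qed.

Lemma act_mid N m n z w : act N m n (mid z w) = mid (act N m n z) (act N m n w).
Proof.
  destruct N, z, w; unfold mid; simpl; f_equal; try field.
  destruct (Z.even m); field.
Qed.

Lemma d2_mid_l z w : d2 (mid z w) z = d2 z w / 4.
Proof. unfold d2, mid; simpl. field. Qed.
Lemma d2_mid_r z w : d2 (mid z w) w = d2 z w / 4.
Proof. unfold d2, mid; simpl. field. Qed.

Lemma IZR_sq_ge1 (k : Z) : k <> 0%Z -> 1 <= IZR k ^ 2.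
Proof.
  intros Hk. replace (IZR k ^ 2) with (IZR (k*k)) by (rewrite mult_IZR; ring).
  apply IZR_le. nia.
Qed.

Lemma act_nofix N m n z : valid_surface N -> (m <> 0 \/ n <> 0)%Z -> act N m n z <> z.
Proof.
  destruct N as [u v | a b]; destruct z as [x y]; simpl; intros Hv Hmn Heq;
    injection Heq; intros H2 H1.
  - assert (E1 : IZR m * fst u + IZR n * fst v = 0) by lra.
    assert (E2 : IZR m * snd u + IZR n * snd v = 0) by lra.
    assert (Em : IZR m * (fst u * snd v - snd u * fst v) = 0).
    { replace (IZR m * (fst u * snd v - snd u * fst v)) with
        ((IZR m * fst u + IZR n * fst v) * snd v - (IZR m * snd u + IZR n * snd v) * fst v) by ring.
      rewrite E1, E2; ring. }
    assert (En : IZR n * (fst u * snd v - snd u * fst v) = 0).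
    { replace (IZR n * (fst u * snd v - snd u * fst v)) with
        ((IZR m * snd u + IZR n * snd v) * fst u - (IZR m * fst u + IZR n * fst v) * snd u) by ring.
      rewrite E1, E2; ring. }
    apply Rmult_integral in Em; apply Rmult_integral in En.
    destruct Em as [Em|Em]; [|contradiction].
    destruct En as [En|En]; [|contradiction].
    apply eq_IZR in Em; apply eq_IZR in En. lia.
  - destruct Hv as [Ha Hb].
    assert (Em : IZR m * a = 0) by lra.
    apply Rmult_integral in Em. destruct Em as [Em|Em]; [|lra].
    apply eq_IZR in Em. subst m. simpl in H2.
    assert (En : IZR n * b = 0) by lra.
    apply Rmult_integral in En. destruct En as [En|En]; [|lra].
    apply eq_IZR in En. lia.
Qed.

Lemma d2_sym z w : d2 z w = d2 w z.
Proof. unfold d2. ring. Qed.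

Lemma embedded_sep N p h m n : valid_surface N -> 0 < h -> embedded_disk N p (h/2) ->
  (m <> 0 \/ n <> 0)%Z -> h <= eucl p (act N m n p).
Proof.
  intros Hv Hh Hemb Hmn.
  destruct (Rle_lt_dec h (eucl p (act N m n p))) as [Hle|Hlt]; [exact Hle|exfalso].
  destruct (act_inv N m n) as [m' [n' Hinv]].
  set (y := mid p (act N m n p)).
  set (x := act N m' n' y).
  assert (Hd : d2 p (act N m n p) < h^2) by (apply eucl_lt_d2; lra).
  assert (Hy : eucl y p < h/2).
  { apply d2_lt_eucl; [lra|]. unfold y. rewrite d2_mid_l. lra. }
  assert (Hx : eucl x p < h/2).
  { apply d2_lt_eucl; [lra|]. unfold x.
    rewrite <- (proj1 (Hinv p)). rewrite act_d2. unfold y. rewrite d2_mid_r. lra. }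
  assert (Hyx : y = act N m n x) by (unfold x; rewrite (proj2 (Hinv y)); reflexivity).
  assert (Hxy : x = y) by (apply (Hemb x y Hx Hy); exists m, n; exact Hyx).
  apply (act_nofix N m n x Hv Hmn). rewrite <- Hyx. symmetry; exact Hxy.
Qed.

Lemma disjoint_sep N p q h m n : 0 < h -> disjoint_disks N p q (h/2) ->
  h <= eucl p (act N m n q).
Proof.
  intros Hh Hdis.
  destruct (Rle_lt_dec h (eucl p (act N m n q))) as [Hle|Hlt]; [exact Hle|exfalso].
  destruct (act_inv N m n) as [m' [n' Hinv]].
  assert (Hd : d2 p (act N m n q) < h^2) by (apply eucl_lt_d2; lra).
  set (x := mid p (act N m n q)).
  apply (Hdis x). split.
  - exists 0%Z, 0%Z. rewrite act00. apply d2_lt_eucl; [lra|]. unfold x. rewrite d2_mid_l. lra.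
  - exists m', n'. apply d2_lt_eucl; [lra|].
    rewrite <- (proj1 (Hinv q)). rewrite act_d2. unfold x. rewrite d2_mid_r. lra.
Qed.
Lemma R2p (a h x u P : R): 0<h -> 0<=x -> 0<=u -> x+u=a -> 3*h^2 <= 4*a^2 -> a <= h ->
  h^2 - x^2 <= P -> 4*h^2 - 3*a^2 - u^2 <= P -> 12*h^4 + 3*h^2*x^2 <= (20*a^2 - 3*h^2)*P.
Proof.
  intros. 
  assert (HK: 0 <= 20*a^2 - 3*h^2) by nra.
  destruct (Rle_dec (4*h^2 - 3*a^2 - u^2) (h^2 - x^2)).
  - assert (12*h^4 + 3*h^2*x^2 <= (20*a^2 - 3*h^2)*(h^2-x^2)).
    { assert (Hy: 0 <= 2*a*x <= 4*a^2 - 3*h^2) by (split; nra).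
      assert (Hy2: (2*a*x)^2 <= (4*a^2 - 3*h^2)^2) by (apply pow_incr; lra).
      assert (0 <= (4*a^2 - 3*h^2)*(h^2 - a^2)) by (apply Rmult_le_pos; nra).
      nra. }
    nra.
  - assert (12*h^4 + 3*h^2*x^2 <= (20*a^2 - 3*h^2)*(4*h^2 - 3*a^2 - u^2)).
    { set (t := 4*a^2 - 3*h^2). set (s := 3*h^2 - 4*a^2 + 2*a*x).
      assert (0 <= s) by (unfold s; nra).
      assert (s <= (3*h^2 - t)/2) by (unfold s, t; nra).
      assert (0 <= t*(h^2 - t)) by (apply Rmult_le_pos; unfold t; nra).
      assert (0 <= s*(12*h^2 - 5*t - 5*s)) by (apply Rmult_le_pos; unfold t in *; nra).
      assert (u = a - x) by lra. subst u. unfold s, t in *. nra. }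
    nra.
Qed.
Lemma core (a b h c x u phi gam d : R):
 0<h -> 0<=c -> c^2 = h^2 - a^2 -> h <= 2*a -> a < h -> 0<=x -> 0<=u -> x+u=a ->
 0 <= gam -> gam + c <= phi -> 2*phi <= b -> h <= d -> d^2 <= x^2+phi^2 -> d^2 <= u^2 + gam^2 ->
 3*h^2*(4*h^2+d^2) <= 5*(a*b)^2.
Proof.
  intros.
  assert (Hphi: 0 <= phi) by lra.
  assert (Hb2: 4*phi^2 <= b^2) by nra.
  cut (3*h^2*(4*h^2+d^2) <= 20*a^2*phi^2). { intros. nra. }
  set (w := sqrt (h^2 - u^2)).
  assert (Hw2: w^2 = h^2 - u^2). { unfold w. rewrite <- Rsqr_pow2. apply Rsqr_sqrt. nra. }
  assert (Hw0: 0 <= w) by (unfold w; apply sqrt_pos).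
  assert (Hwc: c <= w). { apply Rsqr_incr_0_var. rewrite !Rsqr_pow2. nra. lra. }
  set (psi := phi - c).
  assert (Hpsi: w <= psi). { apply Rsqr_incr_0_var. rewrite !Rsqr_pow2. unfold psi. nra. unfold psi; lra. }
  assert (Hd2: d^2 <= u^2 + psi^2) by (unfold psi; nra).
  assert (h^2 <= d^2) by nra.
  destruct (Rle_dec (4*a^2) (3*h^2)).
  - assert (Hpc: phi = psi + c) by (unfold psi; lra). rewrite Hpc.
    assert (0 <= (psi - w)*(20*a^2*(psi+w+2*c) - 3*h^2*(psi+w))).
    { apply Rmult_le_pos. lra.
      assert (0 <= 20*a^2 - 3*h^2) by nra.
      assert (0 <= (20*a^2 - 3*h^2)*(psi+w)) by (apply Rmult_le_pos; lra).
      assert (0 <= a^2*c) by (apply Rmult_le_pos; nra).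
      nra. }
    assert (0 <= (4*a^2-h^2)*(3*h^2-4*a^2)) by (apply Rmult_le_pos; nra).
    assert (4*c^2 <= (w+c)^2) by nra.
    nra.
  - assert (12*h^4 + 3*h^2*x^2 <= (20*a^2 - 3*h^2)*phi^2).
    { apply Rnot_le_lt in n.
      apply (R2p a h x u (phi^2)); try lra.
      assert (c + w <= phi) by (unfold psi in Hpsi; lra).
      assert ((c+w)^2 <= phi^2) by (apply pow_incr; lra). nra. }
    assert (3*h^2*d^2 <= 3*h^2*(x^2+phi^2)) by (apply Rmult_le_compat_l; nra).
    nra.
Qed.

Lemma bigcase h X Y d : 0 < h -> h^2 <= X -> h^2 <= Y -> h <= d -> 4*d^2 <= X+Y ->
  3*h^2*(4*h^2+d^2) <= 5*(X*Y).
Proof.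
  intros. assert (0 <= (X-h^2)*(Y-h^2)) by (apply Rmult_le_pos; lra).
  assert (h^2 <= d^2) by nra.
  assert (0 <= h^2*(X+Y-4*d^2)) by (apply Rmult_le_pos; nra).
  assert (0 <= h^2*(d^2-h^2)) by (apply Rmult_le_pos; nra).
  nra.
Qed.

Lemma floorZ x : exists k : Z, IZR k <= x < IZR k + 1.
Proof.
  exists (up x - 1)%Z. destruct (archimed x) as [H1 H2].
  rewrite minus_IZR. simpl. lra.
Qed.

Lemma floorZs x a : 0 < a -> exists k : Z, 0 <= x - IZR k * a < a.
Proof.
  intros Ha. destruct (floorZ (x/a)) as [k [H1 H2]]. exists k.
  assert (IZR k * a <= x/a * a) by (apply Rmult_le_compat_r; lra).
  assert (x/a*a < (IZR k + 1) * a) by (apply Rmult_lt_compat_r; lra).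
  replace (x/a*a) with x in * by (field; lra). split; nra.
Qed.

Lemma roundZs x a : 0 < a -> exists k : Z, - a/2 <= x - IZR k * a <= a/2.
Proof.
  intros Ha. destruct (floorZs (x + a/2) a Ha) as [k Hk]. exists k. lra.
Qed.

Lemma abs_sep e0 e1 c : 0 <= c -> c^2 <= (e0+e1)^2 -> c^2 <= (e0-e1)^2 ->
  Rabs e1 + c <= Rabs e0 \/ Rabs e0 + c <= Rabs e1.
Proof.
  intros Hc H1 H2.
  assert (Hs : c^2 <= (Rabs e0 - Rabs e1)^2).
  { unfold Rabs; destruct (Rcase_abs e0), (Rcase_abs e1);
      try (replace ((- e0 - - e1)^2) with ((e0-e1)^2) by ring);
      try (replace ((- e0 - e1)^2) with ((e0+e1)^2) by ring);
      try (replace ((e0 - - e1)^2) with ((e0+e1)^2) by ring); lra. }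
  destruct (Rle_dec (Rabs e1) (Rabs e0)).
  - left. nra.
  - right. nra.
Qed.

Lemma klein_key a b p q h d :
  admissible (FlatKlein a b) p q h d -> 3*h^2*(4*h^2+d^2) <= 5*(a*b)^2.
Proof.
  intros [Hv [Hh [Hep [Heq [Hdis Hfd]]]]].
  destruct Hv as [Ha Hb].
  assert (Hp : forall m n, (m <> 0 \/ n <> 0)%Z -> h^2 <= d2 p (act (FlatKlein a b) m n p)).
  { intros m n Hmn. apply le_eucl_d2; [lra|]. apply embedded_sep; auto. split; auto. }
  assert (Hq : forall m n, (m <> 0 \/ n <> 0)%Z -> h^2 <= d2 q (act (FlatKlein a b) m n q)).
  { intros m n Hmn. apply le_eucl_d2; [lra|]. apply embedded_sep; auto. split; auto. }
  destruct Hfd as [Hd1 Hd2].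
  assert (Hhd : h <= d).
  { apply Hd2. intros m n. apply disjoint_sep; auto. }
  assert (Hc : forall m n, d^2 <= d2 p (act (FlatKlein a b) m n q)).
  { intros m n. apply le_eucl_d2; [lra|]. apply Hd1. }
  destruct p as [p1 p2], q as [q1 q2].
  unfold d2 in Hp, Hq, Hc; simpl in Hp, Hq, Hc.
  assert (Kb : h^2 <= b^2).
  { specialize (Hp 0%Z 1%Z ltac:(lia)). simpl in Hp. nra. }
  assert (Kb' : h <= b) by nra.
  assert (Ka : h^2 <= (2*a)^2).
  { specialize (Hp 2%Z 0%Z ltac:(lia)). simpl in Hp. nra. }
  assert (Ka' : h <= 2*a) by nra.
  assert (Gp : forall n, h^2 <= a^2 + (2*p2 - IZR n * b)^2).
  { intros n. specialize (Hp 1%Z n ltac:(lia)). simpl in Hp. nra. }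
  assert (Gq : forall n, h^2 <= a^2 + (2*q2 - IZR n * b)^2).
  { intros n. specialize (Hq 1%Z n ltac:(lia)). simpl in Hq. nra. }
  set (delta := p1 - q1).
  destruct (Rle_dec h a) as [Hah|Hah].
  -
    destruct (roundZs delta a Ha) as [m Hm].
    set (K := p2 - (if Z.even m then q2 else - q2)).
    destruct (roundZs K b Hb) as [n Hn].
    specialize (Hc m n).
    assert (d^2 <= a^2/4 + b^2/4).
    { eapply Rle_trans; [exact Hc|].
      replace (p1 - (q1 + IZR m * a)) with (delta - IZR m * a) by (unfold delta; ring).
      replace (p2 - ((if Z.even m then q2 else - q2) + IZR n * b)) with (K - IZR n * b)
        by (unfold K; ring).
      nra. }
    replace ((a*b)^2) with (a^2*b^2) by ring.
    apply bigcase; nra.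
  - apply Rnot_le_lt in Hah.
    destruct (floorZs delta a Ha) as [m0 Hm0].
    set (x := delta - IZR m0 * a).
    set (u := a - x).
    set (s0 := if Z.even m0 then q2 else - q2).
    set (s1 := if Z.even (m0+1) then q2 else - q2).
    set (K0 := p2 - s0). set (K1 := p2 - s1).
    destruct (roundZs K0 b Hb) as [n0 Hn0].
    destruct (roundZs K1 b Hb) as [n1 Hn1].
    set (e0 := K0 - IZR n0 * b). set (e1 := K1 - IZR n1 * b).
    assert (Hsum : K0 + K1 = 2*p2 /\ (K1 - K0 = 2*q2 \/ K0 - K1 = 2*q2)).
    { unfold K0, K1, s0, s1. rewrite Z.even_add. simpl.
      destruct (Z.even m0); simpl; split; try ring; [left|right]; ring. }
    assert (H1 : d^2 <= x^2 + e0^2).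
    { specialize (Hc m0 n0).
      replace (p1 - (q1 + IZR m0 * a)) with x in Hc by (unfold x, delta; ring).
      replace (p2 - ((if Z.even m0 then q2 else - q2) + IZR n0 * b)) with e0 in Hc
        by (unfold e0, K0, s0; ring). exact Hc. }
    assert (H2 : d^2 <= u^2 + e1^2).
    { specialize (Hc (m0+1)%Z n1). rewrite plus_IZR in Hc.
      replace (p1 - (q1 + (IZR m0 + IZR 1) * a)) with (- u) in Hc by (unfold u, x, delta; simpl; ring).
      replace (p2 - ((if Z.even (m0+1) then q2 else - q2) + IZR n1 * b)) with e1 in Hc
        by (unfold e1, K1, s1; ring). nra. }
    set (c := sqrt (h^2 - a^2)).
    assert (Hc0 : 0 <= c) by apply sqrt_pos.
    assert (Hc2 : c^2 = h^2 - a^2).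
    { unfold c. rewrite <- Rsqr_pow2. apply Rsqr_sqrt. nra. }
    assert (G1 : c^2 <= (e0+e1)^2).
    { specialize (Gp (n0+n1)%Z). rewrite plus_IZR in Gp.
      destruct Hsum as [Hs _].
      replace (2*p2 - (IZR n0 + IZR n1) * b) with (e0+e1) in Gp by (unfold e0, e1; lra). lra. }
    assert (G2 : c^2 <= (e0-e1)^2).
    { destruct Hsum as [_ [Hs|Hs]].
      - specialize (Gq (n1-n0)%Z). rewrite minus_IZR in Gq.
        replace (2*q2 - (IZR n1 - IZR n0) * b) with (e1-e0) in Gq by (unfold e0, e1; lra).
        replace ((e0-e1)^2) with ((e1-e0)^2) by ring. lra.
      - specialize (Gq (n0-n1)%Z). rewrite minus_IZR in Gq.
        replace (2*q2 - (IZR n0 - IZR n1) * b) with (e0-e1) in Gq by (unfold e0, e1; lra).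
        lra. }
    assert (Hx0 : 0 <= x) by (unfold x; lra).
    assert (Hu0 : 0 <= u) by (unfold u, x; lra).
    assert (Hxu : x + u = a) by (unfold u; ring).
    assert (B0 : 2 * Rabs e0 <= b) by (unfold e0; apply Rabs_le in Hn0 || idtac; unfold Rabs; destruct Rcase_abs; lra).
    assert (B1 : 2 * Rabs e1 <= b) by (unfold e1; unfold Rabs; destruct Rcase_abs; lra).
    assert (E0 : e0^2 = Rabs e0 ^2) by (rewrite <- Rsqr_pow2, <- Rsqr_pow2; apply Rsqr_abs).
    assert (E1 : e1^2 = Rabs e1 ^2) by (rewrite <- Rsqr_pow2, <- Rsqr_pow2; apply Rsqr_abs).
    destruct (abs_sep e0 e1 c Hc0 G1 G2) as [S|S].
    + apply (core a b h c x u (Rabs e0) (Rabs e1) d); try lra; try apply Rabs_pos.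
    + apply (core a b h c u x (Rabs e1) (Rabs e0) d); try lra; try apply Rabs_pos.
Qed.

Lemma list_min {T : Type} (g : T -> R) (l : list T) (x0 : T) :
  In x0 l -> exists x, In x l /\ forall y, In y l -> g x <= g y.
Proof.
  revert x0; induction l as [|a l IH]; intros x0 H; [destruct H|].
  destruct l as [|b l'].
  - exists a. split; [left; reflexivity|]. intros y [Hy|[]]. subst; lra.
  - destruct (IH b (or_introl eq_refl)) as [x [Hx Hmin]].
    destruct (Rle_dec (g a) (g x)).
    + exists a. split; [left; reflexivity|]. intros y [Hy|Hy]; [subst; lra|].
      specialize (Hmin y Hy). lra.
    + exists x. split; [right; exact Hx|]. intros y [Hy|Hy]; [subst; lra|]. auto.
Qed.

Definition zrange (K : nat) : list Z :=
  map (fun i => (Z.of_nat i - Z.of_nat K)%Z) (seq 0 (2*K+1)).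

Lemma in_zrange K z : (- Z.of_nat K <= z <= Z.of_nat K)%Z -> In z (zrange K).
Proof.
  intros Hz. unfold zrange. apply in_map_iff.
  exists (Z.to_nat (z + Z.of_nat K)). split.
  - rewrite Z2Nat.id by lia. lia.
  - apply in_seq. lia.
Qed.

Definition quad := (Z * (Z * (Z * Z)))%type.
Definition qdet (t : quad) : Z :=
  match t with (m1, (n1, (m2, n2))) => (m1*n2 - m2*n1)%Z end.
Definition unimod (t : quad) : bool := (Z.eqb (qdet t) 1 || Z.eqb (qdet t) (-1))%bool.

Lemma unimod_spec t : unimod t = true <-> (qdet t = 1 \/ qdet t = -1)%Z.
Proof.
  unfold unimod. rewrite Bool.orb_true_iff, !Z.eqb_eq. tauto.
Qed.

Definition vx (u1 u2 v1 v2 : R) (m n : Z) := IZR m * u1 + IZR n * v1.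
Definition vy (u1 u2 v1 v2 : R) (m n : Z) := IZR m * u2 + IZR n * v2.
Definition nrm (u1 u2 v1 v2 : R) (m n : Z) := vx u1 u2 v1 v2 m n ^ 2 + vy u1 u2 v1 v2 m n ^ 2.
Definition Fq (u1 u2 v1 v2 : R) (t : quad) : R :=
  match t with (m1, (n1, (m2, n2))) => nrm u1 u2 v1 v2 m1 n1 + nrm u1 u2 v1 v2 m2 n2 end.

Section Torus.
Variables u1 u2 v1 v2 : R.

Lemma lagrange a1 a2 b1 b2 : (a1*b2 - a2*b1)^2 <= (a1^2+a2^2)*(b1^2+b2^2).
Proof. assert (0 <= (a1*b1 + a2*b2)^2) by apply pow2_ge_0. nra. Qed.

Lemma coef_bound (m n : Z) :
  (IZR m * (u1*v2 - u2*v1))^2 <= nrm u1 u2 v1 v2 m n * (v1^2 + v2^2) /\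
  (IZR n * (u1*v2 - u2*v1))^2 <= nrm u1 u2 v1 v2 m n * (u1^2 + u2^2).
Proof.
  unfold nrm, vx, vy. split.
  - replace (IZR m * (u1*v2 - u2*v1)) with
      ((IZR m * u1 + IZR n * v1) * v2 - (IZR m * u2 + IZR n * v2) * v1) by ring.
    apply lagrange.
  - replace (IZR n * (u1*v2 - u2*v1)) with
      (u1 * (IZR m * u2 + IZR n * v2) - u2 * (IZR m * u1 + IZR n * v1)) by ring.
    eapply Rle_trans; [apply lagrange|]. right; ring.
Qed.
End Torus.

Section Torus2.
Variables u1 u2 v1 v2 : R.

Lemma nrm_nonneg m n : 0 <= nrm u1 u2 v1 v2 m n.
Proof. unfold nrm. apply Rplus_le_le_0_compat; apply pow2_ge_0. Qed.

Lemma coef_small (HD : u1*v2 - u2*v1 <> 0) (f0 : R) m n :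
  u1^2+u2^2 <= f0 -> v1^2+v2^2 <= f0 -> nrm u1 u2 v1 v2 m n <= f0 ->
  (- up (f0*f0/(u1*v2-u2*v1)^2) < m < up (f0*f0/(u1*v2-u2*v1)^2))%Z /\
  (- up (f0*f0/(u1*v2-u2*v1)^2) < n < up (f0*f0/(u1*v2-u2*v1)^2))%Z.
Proof.
  intros Hu Hv Hn.
  set (D := u1*v2-u2*v1) in *.
  assert (HD2 : 0 < D^2) by (apply pow2_gt_0 ; exact HD) || (assert (0 < D^2) by nra; auto).
  destruct (coef_bound u1 u2 v1 v2 m n) as [Bm Bn]. fold D in Bm, Bn.
  assert (H0 := nrm_nonneg m n).
  assert (Hf : 0 <= f0) by lra.
  assert (Hup := archimed (f0*f0/D^2)).
  assert (key : forall k : Z, (IZR k * D)^2 <= f0 * f0 ->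
            (- up (f0*f0/D^2) < k < up (f0*f0/D^2))%Z).
  { intros k Hk.
    assert (IZR k ^2 <= f0*f0/D^2).
    { apply (Rmult_le_reg_r (D^2)); [lra|]. unfold Rdiv. rewrite Rmult_assoc, Rinv_l by lra.
      rewrite Rmult_1_r. replace (IZR k ^2 * D^2) with ((IZR k * D)^2) by ring. exact Hk. }
    assert (IZR (k*k) < IZR (up (f0*f0/D^2))) by (rewrite mult_IZR; nra).
    apply lt_IZR in H1. nia. }
  split; apply key.
  - eapply Rle_trans; [exact Bm|]. apply Rmult_le_compat; lra || (unfold nrm; nra) || auto.
    all: try apply nrm_nonneg; try nra.
  - eapply Rle_trans; [exact Bn|]. apply Rmult_le_compat; try apply nrm_nonneg; try nra.
Qed.

Lemma min_basis (HD : u1*v2 - u2*v1 <> 0) : exists t : quad, unimod t = true /\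
  forall t', unimod t' = true -> Fq u1 u2 v1 v2 t <= Fq u1 u2 v1 v2 t'.
Proof.
  set (F := Fq u1 u2 v1 v2).
  set (t0 := (1%Z, (0%Z, (0%Z, 1%Z))) : quad).
  set (f0 := F t0).
  assert (Hf0 : f0 = (u1^2+u2^2) + (v1^2+v2^2)).
  { unfold f0, F, t0, Fq, nrm, vx, vy. simpl. ring. }
  set (U := up (f0*f0/(u1*v2-u2*v1)^2)).
  assert (HU : (1 <= U)%Z).
  { assert (0 <= f0*f0/(u1*v2-u2*v1)^2).
    { apply Rmult_le_pos; [nra|]. apply Rlt_le, Rinv_0_lt_compat. nra. }
    destruct (archimed (f0*f0/(u1*v2-u2*v1)^2)) as [H1 _]. fold U in H1.
    assert (0 < U)%Z by (apply lt_IZR; lra). lia. }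
  set (K := Z.to_nat U).
  assert (HK : Z.of_nat K = U) by (unfold K; apply Z2Nat.id; lia).
  set (L := filter unimod (list_prod (zrange K) (list_prod (zrange K) (list_prod (zrange K) (zrange K))))).
  assert (inL : forall t : quad, unimod t = true ->
     (match t with (m1,(n1,(m2,n2))) =>
       (- U <= m1 <= U /\ - U <= n1 <= U /\ - U <= m2 <= U /\ - U <= n2 <= U)%Z end) -> In t L).
  { intros [m1 [n1 [m2 n2]]] Hu Hb. unfold L. apply filter_In. split; [|exact Hu].
    repeat (apply in_prod); apply in_zrange; lia. }
  assert (Ht0 : In t0 L).
  { apply inL; [reflexivity|]. unfold t0. cbv iota beta. lia. }
  destruct (list_min F L t0 Ht0) as [t [HtL Htmin]].
  exists t. split; [apply filter_In in HtL; tauto|].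
  intros t' Ht'.
  assert (Htf0 : F t <= f0) by (apply Htmin; exact Ht0).
  destruct (Rle_dec f0 (F t')) as [Hle|Hlt]; [fold F; lra|].
  apply Rnot_le_lt in Hlt. fold F. apply Htmin. apply inL; [exact Ht'|].
  destruct t' as [m1 [n1 [m2 n2]]].
  unfold F, Fq in Hlt.
  assert (H1 := nrm_nonneg m1 n1). assert (H2 := nrm_nonneg m2 n2).
  assert (Hu : u1^2+u2^2 <= f0) by (rewrite Hf0; assert (0 <= v1^2+v2^2) by nra; lra).
  assert (Hv : v1^2+v2^2 <= f0) by (rewrite Hf0; assert (0 <= u1^2+u2^2) by nra; lra).
  destruct (coef_small HD f0 m1 n1 Hu Hv ltac:(lra)) as [C1 C2].
  destruct (coef_small HD f0 m2 n2 Hu Hv ltac:(lra)) as [C3 C4].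
  fold U in C1, C2, C3, C4. lia.
Qed.
End Torus2.

Lemma cover (a1 a2 b1 b2 t1 t2 : R) : a1*b2 - a2*b1 <> 0 ->
  exists k1 k2 : Z,
    4*(a1^2+a2^2)*((t1 - IZR k1 * a1 - IZR k2 * b1)^2 + (t2 - IZR k1 * a2 - IZR k2 * b2)^2)
    <= (a1^2+a2^2)^2 + (a1*b2 - a2*b1)^2.
Proof.
  intros HD. set (Dw := a1*b2 - a2*b1) in *.
  set (M := a1^2+a2^2).
  assert (HM : 0 < M).
  { unfold M. destruct (Req_dec a1 0), (Req_dec a2 0).
    - exfalso. apply HD. unfold Dw. subst. ring.
    - assert (0 < a2^2) by (apply pow2_gt_0 || nra; auto). nra.
    - nra.
    - nra. }
  destruct (roundZs ((a1*t2 - a2*t1)/Dw) 1 ltac:(lra)) as [k2 Hk2].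
  set (r1 := t1 - IZR k2 * b1). set (r2 := t2 - IZR k2 * b2).
  destruct (roundZs ((r1*a1 + r2*a2)/M) 1 ltac:(lra)) as [k1 Hk1].
  exists k1, k2.
  rewrite Rmult_1_r in Hk1, Hk2.
  set (s1 := t1 - IZR k1 * a1 - IZR k2 * b1). set (s2 := t2 - IZR k1 * a2 - IZR k2 * b2).
  assert (Lag : M * (s1^2 + s2^2) = (s1*a1 + s2*a2)^2 + (a1*s2 - a2*s1)^2) by (unfold M; ring).
  assert (E1 : s1*a1 + s2*a2 = M * ((r1*a1 + r2*a2)/M - IZR k1)).
  { unfold s1, s2, r1, r2, M in *. field. lra. }
  assert (E2 : a1*s2 - a2*s1 = Dw * ((a1*t2 - a2*t1)/Dw - IZR k2)).
  { unfold s1, s2, Dw in *. field. exact HD. }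
  set (l := (r1*a1 + r2*a2)/M - IZR k1) in *.
  set (be := (a1*t2 - a2*t1)/Dw - IZR k2) in *.
  assert (Hl : l^2 <= 1/4) by nra.
  assert (Hb : be^2 <= 1/4) by nra.
  assert (4*M*(s1^2+s2^2) = 4*(M^2 * l^2 + Dw^2 * be^2)).
  { rewrite Rmult_assoc, Lag, E1, E2. ring. }
  rewrite H.
  assert (M^2 * l^2 <= M^2 * (1/4)) by (apply Rmult_le_compat_l; nra).
  assert (Dw^2 * be^2 <= Dw^2 * (1/4)) by (apply Rmult_le_compat_l; nra).
  lra.
Qed.

Lemma torus_final h X D2 d : 0 < h -> 0 < X -> h^2 <= X -> 3*X^2 <= 4*D2 -> h <= d ->
  4*X*d^2 <= X^2 + D2 -> 3*h^2*(4*h^2+d^2) <= 5*D2.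
Proof.
  intros Hh HX HhX HD Hd Hc.
  set (Y := D2/X).
  assert (HD2 : D2 = X*Y) by (unfold Y; field; lra).
  rewrite HD2 in HD, Hc |- *.
  assert (HY : 3*X <= 4*Y) by nra.
  assert (Hc' : 4*d^2 <= X + Y) by nra.
  assert (h^2 <= d^2) by nra.
  apply bigcase; try lra.
Qed.

Lemma vx_add u1 u2 v1 v2 m n m' n' :
  vx u1 u2 v1 v2 (m+m') (n+n') = vx u1 u2 v1 v2 m n + vx u1 u2 v1 v2 m' n'.
Proof. unfold vx. rewrite !plus_IZR. ring. Qed.
Lemma vy_add u1 u2 v1 v2 m n m' n' :
  vy u1 u2 v1 v2 (m+m') (n+n') = vy u1 u2 v1 v2 m n + vy u1 u2 v1 v2 m' n'.
Proof. unfold vy. rewrite !plus_IZR. ring. Qed.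
Lemma vx_sub u1 u2 v1 v2 m n m' n' :
  vx u1 u2 v1 v2 (m-m') (n-n') = vx u1 u2 v1 v2 m n - vx u1 u2 v1 v2 m' n'.
Proof. unfold vx. rewrite !minus_IZR. ring. Qed.
Lemma vy_sub u1 u2 v1 v2 m n m' n' :
  vy u1 u2 v1 v2 (m-m') (n-n') = vy u1 u2 v1 v2 m n - vy u1 u2 v1 v2 m' n'.
Proof. unfold vy. rewrite !minus_IZR. ring. Qed.
Lemma vx_comb u1 u2 v1 v2 k1 k2 m1 n1 m2 n2 :
  vx u1 u2 v1 v2 (k1*m1 + k2*m2) (k1*n1 + k2*n2) =
  IZR k1 * vx u1 u2 v1 v2 m1 n1 + IZR k2 * vx u1 u2 v1 v2 m2 n2.
Proof. unfold vx. rewrite !plus_IZR, !mult_IZR. ring. Qed.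
Lemma vy_comb u1 u2 v1 v2 k1 k2 m1 n1 m2 n2 :
  vy u1 u2 v1 v2 (k1*m1 + k2*m2) (k1*n1 + k2*n2) =
  IZR k1 * vy u1 u2 v1 v2 m1 n1 + IZR k2 * vy u1 u2 v1 v2 m2 n2.
Proof. unfold vy. rewrite !plus_IZR, !mult_IZR. ring. Qed.

Lemma torus_key u v p q h d :
  admissible (FlatTorus u v) p q h d -> 3*h^2*(4*h^2+d^2) <= 5*(area (FlatTorus u v))^2.
Proof.
  intros [Hv [Hh [Hep [Heq [Hdis Hfd]]]]].
  assert (Hp : forall m n, (m <> 0 \/ n <> 0)%Z -> h^2 <= d2 p (act (FlatTorus u v) m n p)).
  { intros m n Hmn. apply le_eucl_d2; [lra|]. apply embedded_sep; auto. }
  destruct Hfd as [Hd1 Hd2].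
  assert (Hhd : h <= d).
  { apply Hd2. intros m n. apply disjoint_sep; auto. }
  assert (Hc : forall m n, d^2 <= d2 p (act (FlatTorus u v) m n q)).
  { intros m n. apply le_eucl_d2; [lra|]. apply Hd1. }
  destruct u as [u1 u2], v as [v1 v2]. simpl in Hv.
  change (area (FlatTorus (u1,u2) (v1,v2))) with (Rabs (u1*v2 - u2*v1)).
  set (D := u1*v2 - u2*v1) in *.
  replace (Rabs D ^ 2) with (D^2) by (rewrite <- !Rsqr_pow2; apply Rsqr_abs).
  set (VX := vx u1 u2 v1 v2). set (VY := vy u1 u2 v1 v2). set (NR := nrm u1 u2 v1 v2).
  assert (Hp' : forall m n, (m <> 0 \/ n <> 0)%Z -> h^2 <= NR m n).
  { intros m n Hmn. specialize (Hp m n Hmn). destruct p as [p1 p2].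
    unfold d2 in Hp; simpl in Hp. unfold NR, nrm, vx, vy.
    replace ((IZR m * u1 + IZR n * v1) ^ 2 + (IZR m * u2 + IZR n * v2) ^ 2) with
      ((p1 - (p1 + IZR m * u1 + IZR n * v1)) ^ 2 + (p2 - (p2 + IZR m * u2 + IZR n * v2)) ^ 2)
      by ring. exact Hp. }
  destruct p as [p1 p2], q as [q1 q2].
  set (t1 := p1 - q1). set (t2 := p2 - q2).
  assert (Hc' : forall m n, d^2 <= (t1 - VX m n)^2 + (t2 - VY m n)^2).
  { intros m n. specialize (Hc m n). unfold d2 in Hc; simpl in Hc.
    unfold t1, t2, VX, VY, vx, vy.
    replace ((p1 - q1 - (IZR m * u1 + IZR n * v1)) ^ 2 + (p2 - q2 - (IZR m * u2 + IZR n * v2)) ^ 2)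
      with ((p1 - (q1 + IZR m * u1 + IZR n * v1)) ^ 2 + (p2 - (q2 + IZR m * u2 + IZR n * v2)) ^ 2)
      by ring. exact Hc. }
  clear Hc Hp Hd1 Hd2 Hep Heq Hdis.
  destruct (min_basis u1 u2 v1 v2 Hv) as [[m1 [n1 [m2 n2]]] [Hu Hmin]].
  apply unimod_spec in Hu. simpl in Hu.
  assert (Um : forall t : quad, (qdet t = 1 \/ qdet t = -1)%Z ->
             NR m1 n1 + NR m2 n2 <= Fq u1 u2 v1 v2 t).
  { intros t Ht. apply (Hmin t). apply unimod_spec. exact Ht. }
  set (a1 := VX m1 n1). set (a2 := VY m1 n1). set (b1 := VX m2 n2). set (b2 := VY m2 n2).
  assert (HM1 : NR m1 n1 = a1^2 + a2^2) by reflexivity.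
  assert (HM2 : NR m2 n2 = b1^2 + b2^2) by reflexivity.
  assert (Mn1 : forall m n, NR m n = VX m n ^2 + VY m n ^2) by reflexivity.
  assert (P1 : b1^2+b2^2 <= (b1+a1)^2 + (b2+a2)^2).
  { assert (H := Um (m1,(n1,(m2+m1,n2+n1)))%Z ltac:(simpl; lia)). unfold Fq in H.
    fold NR in H. rewrite HM1, HM2, (Mn1 (m2+m1)%Z (n2+n1)%Z) in H. unfold VX, VY in H. rewrite vx_add, vy_add in H.
    fold VX VY in H. fold a1 a2 b1 b2 in H. lra. }
  assert (P2 : b1^2+b2^2 <= (b1-a1)^2 + (b2-a2)^2).
  { assert (H := Um (m1,(n1,(m2-m1,n2-n1)))%Z ltac:(simpl; lia)). unfold Fq in H.
    fold NR in H. rewrite HM1, HM2, (Mn1 (m2-m1)%Z (n2-n1)%Z) in H. unfold VX, VY in H. rewrite vx_sub, vy_sub in H.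
    fold VX VY in H. fold a1 a2 b1 b2 in H. lra. }
  assert (P3 : a1^2+a2^2 <= (a1+b1)^2 + (a2+b2)^2).
  { assert (H := Um (m1+m2,(n1+n2,(m2,n2)))%Z ltac:(simpl; lia)). unfold Fq in H.
    fold NR in H. rewrite HM1, HM2, (Mn1 (m1+m2)%Z (n1+n2)%Z) in H. unfold VX, VY in H. rewrite vx_add, vy_add in H.
    fold VX VY in H. fold a1 a2 b1 b2 in H. lra. }
  assert (P4 : a1^2+a2^2 <= (a1-b1)^2 + (a2-b2)^2).
  { assert (H := Um (m1-m2,(n1-n2,(m2,n2)))%Z ltac:(simpl; lia)). unfold Fq in H.
    fold NR in H. rewrite HM1, HM2, (Mn1 (m1-m2)%Z (n1-n2)%Z) in H. unfold VX, VY in H. rewrite vx_sub, vy_sub in H.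
    fold VX VY in H. fold a1 a2 b1 b2 in H. lra. }
  assert (Ha : h^2 <= a1^2+a2^2).
  { rewrite <- HM1. apply Hp'. destruct (Z.eq_dec m1 0); [right|left]; lia. }
  assert (Hb : h^2 <= b1^2+b2^2).
  { rewrite <- HM2. apply Hp'. destruct (Z.eq_dec m2 0); [right|left]; lia. }
  set (P := a1*b1 + a2*b2).
  set (Dw := a1*b2 - a2*b1).
  assert (HDw : Dw^2 = D^2).
  { assert (Dw = IZR (m1*n2 - m2*n1) * D).
    { unfold Dw, a1, a2, b1, b2, VX, VY, vx, vy, D. rewrite minus_IZR, !mult_IZR. ring. }
    rewrite H. destruct Hu as [Hu|Hu]; rewrite Hu; simpl; ring. }
  assert (HD2 : 0 < D^2) by (apply pow2_gt_0 || nra; auto).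
  assert (HDw0 : Dw <> 0) by (intro Hz; rewrite Hz in HDw; nra).
  assert (Lag : (a1^2+a2^2)*(b1^2+b2^2) = P^2 + Dw^2) by (unfold P, Dw; ring).
  assert (HP1 : 4*P^2 <= (a1^2+a2^2)^2) by (unfold P; nra).
  assert (HP2 : 4*P^2 <= (b1^2+b2^2)^2) by (unfold P; nra).
  rewrite <- HDw.
  destruct (Rle_dec (a1^2+a2^2) (b1^2+b2^2)) as [Hab|Hab].
  - destruct (cover a1 a2 b1 b2 t1 t2 HDw0) as [k1 [k2 Hk]].
    specialize (Hc' (k1*m1 + k2*m2)%Z (k1*n1+k2*n2)%Z).
    unfold VX, VY in Hc'. rewrite vx_comb, vy_comb in Hc'. fold VX VY a1 a2 b1 b2 in Hc'.
    apply (torus_final h (a1^2+a2^2)); try lra.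
    + nra.
    + nra.
    + fold Dw in Hk.
      replace ((t1 - (IZR k1 * a1 + IZR k2 * b1)) ^ 2 + (t2 - (IZR k1 * a2 + IZR k2 * b2)) ^ 2)
        with ((t1 - IZR k1 * a1 - IZR k2 * b1) ^ 2 + (t2 - IZR k1 * a2 - IZR k2 * b2) ^ 2) in Hc' by ring.
      assert (0 <= a1^2+a2^2) by nra. nra.
  - apply Rnot_le_lt in Hab.
    assert (HDw0' : b1*a2 - b2*a1 <> 0) by (intro; apply HDw0; unfold Dw; lra).
    destruct (cover b1 b2 a1 a2 t1 t2 HDw0') as [k1 [k2 Hk]].
    specialize (Hc' (k2*m1 + k1*m2)%Z (k2*n1+k1*n2)%Z).
    unfold VX, VY in Hc'. rewrite vx_comb, vy_comb in Hc'. fold VX VY a1 a2 b1 b2 in Hc'.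
    replace ((b1*a2 - b2*a1)^2) with (Dw^2) in Hk by (unfold Dw; ring).
    apply (torus_final h (b1^2+b2^2)); try lra.
    + nra.
    + nra.
    + replace ((t1 - (IZR k2 * a1 + IZR k1 * b1)) ^ 2 + (t2 - (IZR k2 * a2 + IZR k1 * b2)) ^ 2)
        with ((t1 - IZR k1 * b1 - IZR k2 * a1) ^ 2 + (t2 - IZR k1 * b2 - IZR k2 * a2) ^ 2) in Hc' by ring.
      assert (0 <= b1^2+b2^2) by nra. nra.
Qed.

Lemma key N p q h d : admissible N p q h d -> 3*h^2*(4*h^2+d^2) <= 5*(area N)^2.
Proof.
  destruct N as [u v | a b]; intros H.
  - apply (torus_key u v p q h d H).
  - apply (klein_key a b p q h d H).
Qed.

Lemma area_pos N : valid_surface N -> 0 < area N.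
Proof.
  destruct N as [u v | a b]; simpl; intros H.
  - apply Rabs_pos_lt. exact H.
  - destruct H; nra.
Qed.

Lemma sqrt_sq_eq x : 0 <= x -> sqrt x ^ 2 = x.
Proof. intros. rewrite <- Rsqr_pow2. apply Rsqr_sqrt. exact H. Qed.

Lemma obj_bound N p q h d : admissible N p q h d ->
  objective N h d <= sqrt 5 / sqrt 3.
Proof.
  intros Hadm. assert (Hk := key N p q h d Hadm).
  destruct Hadm as [Hv [Hh _]].
  assert (HA := area_pos N Hv).
  set (A := area N) in *. unfold objective. fold A.
  set (Q := 4*h^2 + d^2) in *.
  assert (HQ : 0 <= Q) by (unfold Q; nra).
  assert (s3 : sqrt 3 ^ 2 = 3) by (apply sqrt_sq_eq; lra).
  assert (s5 : sqrt 5 ^ 2 = 5) by (apply sqrt_sq_eq; lra).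
  assert (sQ : sqrt Q ^ 2 = Q) by (apply sqrt_sq_eq; lra).
  assert (p3 : 0 < sqrt 3) by (apply sqrt_lt_R0; lra).
  assert (p5 : 0 < sqrt 5) by (apply sqrt_lt_R0; lra).
  assert (pQ : 0 <= sqrt Q) by apply sqrt_pos.
  assert (Hm : h * sqrt Q * sqrt 3 <= sqrt 5 * A).
  { assert (Hsq : (h * sqrt Q * sqrt 3)^2 <= (sqrt 5 * A)^2).
    { replace ((h * sqrt Q * sqrt 3)^2) with (h^2 * sqrt Q^2 * sqrt 3^2) by ring.
      replace ((sqrt 5 * A)^2) with (sqrt 5^2 * A^2) by ring.
      rewrite s3, s5, sQ. lra. }
    assert (0 <= h * sqrt Q * sqrt 3) by (apply Rmult_le_pos; [apply Rmult_le_pos|]; lra).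
    assert (0 <= sqrt 5 * A) by nra.
    nra. }
  apply (Rmult_le_reg_r (A * sqrt 3)); [nra|].
  replace (h * sqrt Q / A * (A * sqrt 3)) with (h * sqrt Q * sqrt 3) by (field; lra).
  replace (sqrt 5 / sqrt 3 * (A * sqrt 3)) with (sqrt 5 * A) by (field; lra).
  exact Hm.
Qed.

Definition N0 : flat_surface := FlatTorus (1, 0) (0, sqrt 3).
Definition p0 : point := (0, 0).
Definition q0 : point := (1/2, sqrt 3 / 2).

Lemma half_int (k : Z) : 1/4 <= (IZR k + 1/2)^2.
Proof.
  destruct (Z_le_gt_dec 0 k) as [Hk|Hk].
  - apply IZR_le in Hk. nra.
  - assert (k <= -1)%Z by lia. apply IZR_le in H. nra.
Qed.

Lemma d2_tri x y c : d2 x y <= 2 * d2 x c + 2 * d2 y c.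
Proof.
  unfold d2.
  assert (0 <= (fst x - fst c + (fst y - fst c))^2) by apply pow2_ge_0.
  assert (0 <= (snd x - snd c + (snd y - snd c))^2) by apply pow2_ge_0.
  nra.
Qed.

Lemma N0_emb c : embedded_disk N0 c (1/2).
Proof.
  intros x y Hx Hy [m [n Hyx]].
  apply eucl_lt_d2 in Hx; [|lra]. apply eucl_lt_d2 in Hy; [|lra].
  assert (Hxy := d2_tri y x c).
  assert (s3 : sqrt 3 ^ 2 = 3) by (apply sqrt_sq_eq; lra).
  assert (E : d2 y x = IZR m ^2 + 3 * IZR n ^2).
  { rewrite <- s3. rewrite Hyx. destruct x as [x1 x2]. unfold d2, N0, act; cbn [fst snd]. ring. }
  assert (Hm : m = 0%Z).
  { destruct (Z.eq_dec m 0) as [|Hm]; auto. exfalso. apply IZR_sq_ge1 in Hm.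
    assert (0 <= IZR n ^2) by apply pow2_ge_0. lra. }
  assert (Hn : n = 0%Z).
  { destruct (Z.eq_dec n 0) as [|Hn]; auto. exfalso. apply IZR_sq_ge1 in Hn.
    assert (0 <= IZR m ^2) by apply pow2_ge_0. lra. }
  subst m n. rewrite act00 in Hyx. symmetry; exact Hyx.
Qed.

Lemma N0_admissible : admissible N0 p0 q0 1 1.
Proof.
  assert (s3 : sqrt 3 ^ 2 = 3) by (apply sqrt_sq_eq; lra).
  assert (p3 : 0 < sqrt 3) by (apply sqrt_lt_R0; lra).
  assert (Hdq : forall m n, 1 <= d2 p0 (act N0 m n q0)).
  { intros m n.
    replace (act N0 m n q0) with (1 / 2 + IZR m * 1 + IZR n * 0, sqrt 3 / 2 + IZR m * 0 + IZR n * sqrt 3)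
      by reflexivity.
    unfold d2, p0; cbn [fst snd].
    assert (H1 := half_int m). assert (H2 := half_int n).
    replace ((0 - (1 / 2 + IZR m * 1 + IZR n * 0)) ^ 2 + (0 - (sqrt 3 / 2 + IZR m * 0 + IZR n * sqrt 3)) ^ 2)
      with ((IZR m + 1/2)^2 + sqrt 3 ^2 * (IZR n + 1/2)^2) by field.
    rewrite s3. lra. }
  split; [unfold N0; simpl; nra|].
  split; [lra|].
  replace (1/2) with (1/2) by reflexivity.
  split; [apply N0_emb|].
  split; [apply N0_emb|].
  split.
  - intros x [[m [n Hp]] [m' [n' Hq]]].
    apply eucl_lt_d2 in Hp; [|lra]. apply eucl_lt_d2 in Hq; [|lra].
    destruct x as [x1 x2].
    change (act N0 m n (x1,x2)) with (x1 + IZR m * 1 + IZR n * 0, x2 + IZR m * 0 + IZR n * sqrt 3) in Hp.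
    change (act N0 m' n' (x1,x2)) with (x1 + IZR m' * 1 + IZR n' * 0, x2 + IZR m' * 0 + IZR n' * sqrt 3) in Hq.
    unfold d2, p0, q0 in Hp, Hq; cbn [fst snd] in Hp, Hq.
    set (A1 := x1 + IZR m * 1 + IZR n * 0 - 0) in Hp.
    set (A2 := x2 + IZR m * 0 + IZR n * sqrt 3 - 0) in Hp.
    set (B1 := x1 + IZR m' * 1 + IZR n' * 0 - 1/2) in Hq.
    set (B2 := x2 + IZR m' * 0 + IZR n' * sqrt 3 - sqrt 3 / 2) in Hq.
    assert (H1 := half_int (m - m')). assert (H2 := half_int (n - n')).
    rewrite !minus_IZR in H1, H2.
    assert (E1 : A1 - B1 = IZR m - IZR m' + 1/2) by (unfold A1, B1; field).
    assert (E2 : A2 - B2 = sqrt 3 * (IZR n - IZR n' + 1/2)) by (unfold A2, B2; field).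
    assert (F1 : (A1 - B1)^2 <= 2*A1^2 + 2*B1^2) by (assert (0 <= (A1+B1)^2) by apply pow2_ge_0; nra).
    assert (F2 : (A2 - B2)^2 <= 2*A2^2 + 2*B2^2) by (assert (0 <= (A2+B2)^2) by apply pow2_ge_0; nra).
    rewrite E1 in F1. rewrite E2 in F2.
    replace ((sqrt 3 * (IZR n - IZR n' + 1/2))^2) with (sqrt 3 ^2 * (IZR n - IZR n' + 1/2)^2) in F2 by ring.
    rewrite s3 in F2.
    lra.
  - split.
    + intros m n. apply d2_le_eucl; [lra|]. rewrite pow1. apply Hdq.
    + intros d' Hd'. specialize (Hd' 0%Z 0%Z). rewrite act00 in Hd'.
      rewrite eucl_d2 in Hd'.
      replace (d2 p0 q0) with 1 in Hd'.
      2:{ unfold d2, p0, q0; cbn [fst snd].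
          replace ((0 - 1/2)^2 + (0 - sqrt 3 / 2)^2) with (1/4 + sqrt 3 ^2 / 4) by field.
          rewrite s3. field. }
      rewrite sqrt_1 in Hd'. exact Hd'.
Qed.

Lemma N0_obj : objective N0 1 1 = sqrt 5 / sqrt 3.
Proof.
  unfold objective. change (area N0) with (Rabs (1 * sqrt 3 - 0 * 0)).
  replace (4 * 1^2 + 1^2) with 5 by ring.
  replace (1 * sqrt 3 - 0 * 0) with (sqrt 3) by ring.
  rewrite Rabs_pos_eq by (apply sqrt_pos). rewrite Rmult_1_l. reflexivity.
Qed.

Theorem lemma6 :
  exists (N : flat_surface) (p q : point) (h d : R),
    admissible N p q h d /\
    (forall (N' : flat_surface) (p' q' : point) (h' d' : R),
        admissible N' p' q' h' d' -> objective N' h' d' <= objective N h d).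
Proof.
  exists N0, p0, q0, 1, 1. split; [exact N0_admissible|].
  intros N' p' q' h' d' H. rewrite N0_obj. exact (obj_bound N' p' q' h' d' H).
Qed.
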